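(* Let $P^1,\dots,P^4\in\mathbb{R}^n$ be in general position, let $Q^0$ be the equidistant point from $P^1,\dots,P^4$ with barycentric coordinate $\boldsymbol\lambda^0$, and suppose $\lambda^0_1<0$, $\lambda^0_2<0$, $\lambda^0_3\ge0$, $\lambda^0_4\ge0$. Let $Q^{1(1)}=\pi(Q^0|L(P^2,P^3,P^4))$ and $Q^{1(2)}=\pi(Q^0|L(P^1,P^3,P^4))$, with barycentric coordinates $\boldsymbol\lambda^{1(1)},\boldsymbol\lambda^{1(2)}$ about $P^1,\dots,P^4$, and suppose $\lambda^{1(2)}_1<0$. Suppose further $\lambda^{1(1)}_2\ge0$, $\lambda^{1(1)}_3<0$, $\lambda^{1(1)}_4\ge0$, and let $Q^{2\dagger}=\pi(Q^0|L(P^2,P^4))$. Then the center of the smallest enclosing circle of $P^1,\dots,P^4$ is $Q^\ast=Q^{2\dagger}$ and its radius is $d^\ast=d(P^2,Q^{2\dagger})$.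
   Context: $d$ is the Euclidean distance. Points are in general position if $P^2-P^1,\dots,P^m-P^1$ are linearly independent. $L(S^1,\dots,S^r)$ is the affine subspace spanned by the points; $\pi(Q'|L)$ is the orthogonal projection onto the affine subspace $L$. The barycentric coordinate of $Q\in L(P^1,\dots,P^m)$ is the unique $\boldsymbol\lambda$ with $\sum_i\lambda_i=1$, $Q=\sum_i\lambda_iP^i$. The equidistant point is the unique $Q^0\in L(P^1,\dots,P^m)$ with all $d(P^i,Q^0)$ equal. The smallest enclosing circle has center $Q^\ast$ attaining $\min_Q\max_i d(P^i,Q)$ and radius $d^\ast$ equal to this minimum. *)

(* Defs.v *)
From HB Require Import structures.
From mathcomp Require Import all_boot all_order all_algebra.
From mathcomp Require Import reals.
Set Implicit Arguments. Unset Strict Implicit. Unset Printing Implicit Defensive.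
Import Order.TTheory GRing.Theory Num.Theory.
Local Open Scope ring_scope.

Section Geometry.
Variables (R : realType) (n : nat).
Notation pt := 'rV[R]_n.

Definition dotp (x y : pt) : R := \sum_(j < n) x 0 j * y 0 j.
Definition dist (x y : pt) : R := Num.sqrt (dotp (x - y) (x - y)).

(* P^1,...,P^m in general position: P^2-P^1,...,P^m-P^1 linearly independent *)
Definition gen_pos (m : nat) (P : 'I_m.+1 -> pt) : Prop :=
  row_free (\matrix_(i < m) (P (lift ord0 i) - P ord0)).

Definition in_aff (S : seq pt) (x : pt) : Prop :=
  exists lam : seq R, size lam = size S /\
    \sum_(i < size S) lam`_i = 1 /\ x = \sum_(i < size S) lam`_i *: S`_i.

Definition is_proj (S : seq pt) (Q X : pt) : Prop :=
  in_aff S X /\ forall Y, in_aff S Y -> dotp (Q - X) (Y - X) = 0.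

Definition is_bary (m : nat) (P : 'I_m -> pt) (Q : pt) (lam : 'I_m -> R) : Prop :=
  \sum_(i < m) lam i = 1 /\ Q = \sum_(i < m) lam i *: P i.

Definition is_equidistant (m : nat) (P : 'I_m -> pt) (Q0 : pt) : Prop :=
  in_aff [seq P i | i <- enum 'I_m] Q0 /\
  forall i j, dist (P i) Q0 = dist (P j) Q0.

Definition maxdist (m : nat) (P : 'I_m -> pt) (Q : pt) : R :=
  \big[Num.max/0]_(i < m) dist (P i) Q.

Definition is_sec_center (m : nat) (P : 'I_m -> pt) (Q : pt) : Prop :=
  forall Q', maxdist P Q <= maxdist P Q'.

End Geometry.

(* indices 1..4 of the paper, as elements of 'I_4 *)
Definition i1 : 'I_4 := @Ordinal 4 0 isT.
Definition i2 : 'I_4 := @Ordinal 4 1 isT.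
Definition i3 : 'I_4 := @Ordinal 4 2 isT.
Definition i4 : 'I_4 := @Ordinal 4 3 isT.

(* Main.v *)
Require Import Defs.
From HB Require Import structures.
From mathcomp Require Import all_boot all_order all_algebra reals.
From mathcomp Require Import ring lra.
Import Order.TTheory GRing.Theory Num.Theory.
Local Open Scope ring_scope.
Set Implicit Arguments. Unset Strict Implicit.

Section L.
Variables (R : realType) (n : nat).
Implicit Types x y z : 'rV[R]_n.

Lemma dotpC x y : dotp x y = dotp y x.
Proof. by apply: eq_bigr => j _; rewrite mulrC. Qed.
Lemma dotpDl x y z : dotp (x + y) z = dotp x z + dotp y z.
Proof. by rewrite /dotp -big_split; apply: eq_bigr => j _; rewrite !mxE mulrDl. Qed.
Lemma dotpZl a x z : dotp (a *: x) z = a * dotp x z.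
Proof. by rewrite /dotp mulr_sumr; apply: eq_bigr => j _; rewrite !mxE mulrA. Qed.
Lemma dotpNl x z : dotp (- x) z = - dotp x z.
Proof. by rewrite -scaleN1r dotpZl mulN1r. Qed.
Lemma dotpBl x y z : dotp (x - y) z = dotp x z - dotp y z.
Proof. by rewrite dotpDl dotpNl. Qed.
Lemma dotpDr x y z : dotp z (x + y) = dotp z x + dotp z y.
Proof. by rewrite dotpC dotpDl !(dotpC z). Qed.
Lemma dotpBr x y z : dotp z (x - y) = dotp z x - dotp z y.
Proof. by rewrite dotpC dotpBl !(dotpC z). Qed.
Lemma dotpZr a x z : dotp z (a *: x) = a * dotp z x.
Proof. by rewrite dotpC dotpZl dotpC. Qed.
Lemma dotp0l z : dotp 0 z = 0.
Proof. by rewrite -(scale0r 0) dotpZl mul0r. Qed.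
Lemma dotp_ge0 x : 0 <= dotp x x.
Proof. by apply: sumr_ge0 => j _; rewrite -expr2 sqr_ge0. Qed.
Lemma dotp_eq0 x : dotp x x = 0 -> x = 0.
Proof.
move=> /eqP; rewrite psumr_eq0 => [/allP H|j _]; last by rewrite -expr2 sqr_ge0.
apply/rowP => j; rewrite mxE; apply/eqP; rewrite -sqrf_eq0 expr2.
by apply: (H j); rewrite mem_index_enum.
Qed.
Lemma dotp_suml m (F : 'I_m -> 'rV[R]_n) z :
  dotp (\sum_(i < m) F i) z = \sum_(i < m) dotp (F i) z.
Proof.
elim/big_rec2: _ => [|i a b _ <-]; first by rewrite dotp0l.
by rewrite dotpDl.
Qed.

Lemma sum4 (F : 'I_4 -> R) : \sum_(i < 4) F i = F i1 + F i2 + F i3 + F i4.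
Proof.
rewrite !big_ord_recl big_ord0 addr0 !addrA.
by congr (_ + _ + _ + _); congr F; apply/val_inj.
Qed.
Lemma sum4v (F : 'I_4 -> 'rV[R]_n) : \sum_(i < 4) F i = F i1 + F i2 + F i3 + F i4.
Proof.
rewrite !big_ord_recl big_ord0 addr0 !addrA.
by congr (_ + _ + _ + _); congr F; apply/val_inj.
Qed.

Lemma maxdist4 (P : 'I_4 -> 'rV[R]_n) Q :
  maxdist P Q = Num.max (dist (P i1) Q) (Num.max (dist (P i2) Q)
     (Num.max (dist (P i3) Q) (Num.max (dist (P i4) Q) 0))).
Proof.
rewrite /maxdist !big_ord_recl big_ord0.
by do 4 (congr Num.max; first by congr dist; congr P; apply/val_inj).
Qed.

End L.

Lemma bary_uniq (R : realType) (n m : nat) (P : 'I_m.+1 -> 'rV[R]_n) (c : 'I_m.+1 -> R) :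
  gen_pos P -> \sum_i c i = 0 -> \sum_i c i *: P i = 0 -> forall i, c i = 0.
Proof.
move=> gp s0 v0.
set A := \matrix_(i < m) (P (lift ord0 i) - P ord0).
set v := \row_(i < m) c (lift ord0 i).
have vA : v *m A = 0 *m A.
  rewrite mul0mx mulmx_sum_row.
  under eq_bigr => i _ do rewrite rowK mxE scalerBr.
  rewrite sumrB -scaler_suml.
  move: s0 v0; rewrite !big_ord_recl => s0 v0.
  have -> : \sum_(i < m) c (lift ord0 i) = - c ord0 by apply/eqP; rewrite -addr_eq0 addrC s0.
  by rewrite scaleNr opprK addrC.
have /rowP v00 : v = 0 by exact: (@row_free_inj _ 1 m n A gp v 0 vA).
have hl : forall i, c (lift ord0 i) = 0 by move=> i; move: (v00 i); rewrite !mxE.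
move=> i; case: (unliftP ord0 i) => [j ->|->]; first exact: hl.
move: s0; rewrite big_ord_recl big1 ?addr0 //.
Qed.

Section M.
Variables (R : realType) (n : nat).
Implicit Types x y z : 'rV[R]_n.

Lemma expB x y : dotp (x - y) (x - y) = dotp x x - 2 * dotp x y + dotp y y.
Proof. rewrite !(dotpBl, dotpBr) (dotpC y x); ring. Qed.
Lemma expD x y : dotp (x + y) (x + y) = dotp x x + 2 * dotp x y + dotp y y.
Proof. rewrite !(dotpDl, dotpDr) (dotpC y x); ring. Qed.
Lemma splitd x y z : x - z = (x - y) + (y - z).
Proof. by rewrite addrA subrK. Qed.
Lemma key x y z : dotp (x - z) (x - z) =
  dotp (x - y) (x - y) - 2 * dotp (x - y) (z - y) + dotp (z - y) (z - y).
Proof. by rewrite -expB opprB addrA subrK. Qed.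

Lemma wsum m (w : 'I_m -> R) (P : 'I_m -> 'rV[R]_n) X Z V :
  \sum_i w i = 1 -> X = \sum_i w i *: P i ->
  \sum_i w i * dotp (P i - Z) V = dotp (X - Z) V.
Proof.
move=> s1 ->; rewrite dotpBl dotp_suml.
under eq_bigr => i _ do rewrite dotpBl mulrBr.
rewrite sumrB -mulr_suml s1 mul1r; congr (_ - _).
by apply: eq_bigr => i _; rewrite dotpZl.
Qed.

Lemma sqrt_eq (a b : R) : 0 <= a -> 0 <= b -> Num.sqrt a = Num.sqrt b -> a = b.
Proof. by move=> ha hb E; rewrite -(sqr_sqrtr ha) -(sqr_sqrtr hb) E. Qed.

Lemma dist_le x y z w : dist x y <= dist z w <-> dotp (x - y) (x - y) <= dotp (z - w) (z - w).
Proof. by rewrite /dist ler_sqrt ?dotp_ge0. Qed.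

Lemma aff2 x y X : in_aff [:: x; y] X -> exists a b, a + b = 1 /\ X = a *: x + b *: y.
Proof.
case=> l [ls [s e]]; case: l ls s e => [|a [|b []]] //= _ s e; exists a, b.
by move: s e; rewrite !big_ord_recl !big_ord0 /= !addr0 => s e; split.
Qed.
Lemma aff3 x y z X : in_aff [:: x; y; z] X ->
  exists a b c, a + b + c = 1 /\ X = a *: x + b *: y + c *: z.
Proof.
case=> l [ls [s e]]; case: l ls s e => [|a [|b [|c []]]] //= _ s e; exists a, b, c.
by move: s e; rewrite !big_ord_recl !big_ord0 /= !addr0 !addrA => s e; split.
Qed.
Lemma aff2I a b x y : a + b = 1 -> in_aff [:: x; y] (a *: x + b *: y).
Proof.
by move=> s; exists [:: a; b]; rewrite !big_ord_recl !big_ord0 /= !addr0.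
Qed.
Lemma aff3I a b c x y z : a + b + c = 1 -> in_aff [:: x; y; z] (a *: x + b *: y + c *: z).
Proof.
by move=> s; exists [:: a; b; c]; rewrite !big_ord_recl !big_ord0 /= !addr0 !addrA.
Qed.

End M.

Theorem theorem11 (R : realType) (n : nat) (P : 'I_4 -> 'rV[R]_n)
  (Q0 Q11 Q12 Q2 : 'rV[R]_n) (lam0 lam11 lam12 : 'I_4 -> R) :
  gen_pos P ->
  is_equidistant P Q0 -> is_bary P Q0 lam0 ->
  lam0 i1 < 0 -> lam0 i2 < 0 -> 0 <= lam0 i3 -> 0 <= lam0 i4 ->
  is_proj [:: P i2; P i3; P i4] Q0 Q11 -> is_bary P Q11 lam11 ->
  is_proj [:: P i1; P i3; P i4] Q0 Q12 -> is_bary P Q12 lam12 ->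
  lam12 i1 < 0 ->
  0 <= lam11 i2 -> lam11 i3 < 0 -> 0 <= lam11 i4 ->
  is_proj [:: P i2; P i4] Q0 Q2 ->
  (forall Q, is_sec_center P Q <-> Q = Q2) /\
  maxdist P Q2 = dist (P i2) Q2.
Proof.
move=> gp [_ eqd] [sl0 Q0e] l1 l2 l3 l4 [aff11 orth11] [sl11 Q11e] _ _ _
  l11_2 l11_3 l11_4 [/aff2 [a [b [ab Q2e]]] orth2].
have [a' [b' [c' [abc Q11e']]]] := aff3 aff11.
pose wt (i : 'I_4) := if i == i1 then 0 else if i == i2 then a'
   else if i == i3 then b' else c'.
have l11_1 : lam11 i1 = 0.
  have := @bary_uniq R n 3 P (fun i => lam11 i - wt i) gp.
  rewrite sumrB sl11 sum4 /wt /= !add0r abc subrr => /(_ erefl).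
  under eq_bigr => i _ do rewrite scalerBl.
  rewrite sumrB -Q11e sum4v /= scale0r add0r -Q11e' subrr => /(_ erefl i1).
  by rewrite /wt /= subr0.
set u := P i2 - Q2; set v := P i4 - Q2.
have o2 : dotp u (Q0 - Q2) = 0.
  rewrite dotpC orth2 //.
  have h := @aff2I R n 1 0 (P i2) (P i4) (addr0 1).
  by rewrite scale1r scale0r addr0 in h.
have o4 : dotp v (Q0 - Q2) = 0.
  rewrite dotpC orth2 //.
  have h := @aff2I R n 0 1 (P i2) (P i4) (add0r 1).
  by rewrite scale1r scale0r add0r in h.
have qq := dotp_ge0 (Q0 - Q2).
have uv : dotp u u = dotp v v.
  have := eqd i2 i4; rewrite /dist => /sqrt_eq; rewrite !dotp_ge0 => /(_ erefl erefl).
  by rewrite (key _ Q2) (key (P i4) Q2) -/u -/v o2 o4; lra.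
have auv : a *: u + b *: v = 0.
  by rewrite /u /v !scalerBr addrACA -opprD -scalerDl ab scale1r -Q2e subrr.
have uv0 : u + v = 0.
  have : dotp (a *: u) (a *: u) = dotp (b *: v) (b *: v).
    by move/eqP: auv; rewrite addr_eq0 => /eqP ->; rewrite dotpNl dotpC dotpNl opprK.
  rewrite !(dotpZl, dotpZr) -uv => e.
  have [u0|un0] := eqVneq (dotp u u) 0.
    by rewrite (dotp_eq0 u0) (@dotp_eq0 R n v) ?add0r // -uv.
  have eab : a = b.
    apply/eqP; rewrite -subr_eq0; apply/eqP; apply: (mulIf un0).
    by rewrite mul0r; have : (a + b) = 1 := ab; nra.
  have a0 : a != 0 by apply/eqP => a0; move: ab; rewrite -eab a0; lra.
  apply/eqP; have := scaler_eq0 a (u + v); rewrite (negbTE a0) /= => <-.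
  by rewrite scalerDr {2}eab auv.
set z := Q0 - Q2.
pose f i := dotp (P i - Q2) z.
have S0 : \sum_i lam0 i * f i = dotp z z by apply: wsum.
have S11 : \sum_i lam11 i * f i = dotp (Q11 - Q2) z by apply: wsum.
have h2 : in_aff [:: P i2; P i3; P i4] Q2.
  have h : in_aff [:: P i2; P i3; P i4] (a *: P i2 + 0 *: P i3 + b *: P i4).
    by apply: aff3I; rewrite addr0.
  by rewrite scale0r addr0 -Q2e in h.
have o11 := orth11 _ h2.
have S11' : 0 <= dotp (Q11 - Q2) z.
  have -> : z = (Q0 - Q11) + (Q11 - Q2) by rewrite /z addrA subrK.
  have e0 : dotp (Q11 - Q2) (Q0 - Q11) = 0 by rewrite -opprB dotpNl dotpC o11 oppr0.
  by rewrite dotpDr e0 add0r dotp_ge0.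
have f2 : f i2 = 0 by [].
have f4 : f i4 = 0 by [].
rewrite sum4 f2 f4 in S0; rewrite sum4 f2 f4 l11_1 in S11.
have f3 : f i3 <= 0 by nra.
have f1 : f i1 <= 0 by nra.
have bnd : forall i, f i <= 0 -> dotp (P i - Q2) (P i - Q2) <= dotp u u.
  move=> i fi; have := eqd i i2; rewrite /dist => /sqrt_eq; rewrite !dotp_ge0 => /(_ erefl erefl).
  rewrite (key _ Q2) (key (P i2) Q2) -/u o2 -/z -/(f i); lra.
have vu : v = - u by apply/eqP; rewrite -addr_eq0 addrC uv0.
have E : forall Q, dotp (P i2 - Q) (P i2 - Q) + dotp (P i4 - Q) (P i4 - Q)
    = 2 * dotp u u + 2 * dotp (Q2 - Q) (Q2 - Q).
  move=> Q.
  have -> : P i2 - Q = u + (Q2 - Q) by rewrite /u addrA subrK.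
  have -> : P i4 - Q = v + (Q2 - Q) by rewrite /v addrA subrK.
  have nn : dotp (-u) (-u) = dotp u u by rewrite dotpNl dotpC dotpNl opprK.
  rewrite (expD u (Q2 - Q)) (expD v (Q2 - Q)) vu nn dotpNl; lra.
have ru : dist (P i2) Q2 = Num.sqrt (dotp u u) by [].
have hm : maxdist P Q2 = dist (P i2) Q2.
  rewrite maxdist4; apply/le_anti/andP; split.
    rewrite !ge_max sqrtr_ge0 andbT; apply/and4P; split; apply/dist_le; rewrite -/u.
    - exact: bnd.
    - by rewrite -/u.
    - exact: bnd.
    - by rewrite -/v -uv.
  by rewrite !le_max lexx /= orbT.
have lb : forall Q, dist (P i2) Q2 <= maxdist P Q.
  move=> Q; rewrite maxdist4 !le_max.
  have := E Q; have := dotp_ge0 (Q2 - Q) => g e.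
  case: (lerP (dotp u u) (dotp (P i2 - Q) (P i2 - Q))) => h.
    by apply/orP; right; apply/orP; left; apply/dist_le; rewrite -/u.
  apply/orP; right; apply/orP; right; apply/orP; right; apply/orP; left.
  apply/dist_le; rewrite -/u; lra.
split=> //; move=> Q; split.
  move=> sec; have := sec Q2; rewrite hm maxdist4 !ge_max => /and4P [_ k2 _ /andP [k4 _]].
  move/dist_le: k2; move/dist_le: k4; rewrite -/u => h4 h2'.
  have := E Q; have := dotp_ge0 (Q2 - Q) => g e.
  have z0 : dotp (Q2 - Q) (Q2 - Q) = 0 by lra.
  by apply/esym/subr0_eq/dotp_eq0.
by move=> -> Q'; rewrite hm.
Qed.
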